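(* Let $m>n\ge1$ be coprime integers, and let $$\mathcal{A}_{\frac{m}{n}}(q)=q\,\mathcal{N}_{\frac{m}{n}}(q)\mathcal{N}_{\frac{n}{m}}(q)+\mathcal{D}_{\frac{m}{n}}(q)\mathcal{D}_{\frac{n}{m}}(q),$$ $$\mathcal{B}_{\frac{m}{n}}(q)=\mathcal{N}_{\frac{m}{n}}(q)\mathcal{D}_{\frac{n}{m}}(q)-\mathcal{D}_{\frac{m}{n}}(q)\mathcal{N}_{\frac{n}{m}}(q),$$ $$\mathcal{C}_{\frac{m}{n}}(q)=q\,\mathcal{N}_{\frac{m}{n}}(q)^2+\mathcal{D}_{\frac{m}{n}}(q)^2.$$ Then (i) $\mathcal{A}_{\frac{m}{n}}$ and $\mathcal{B}_{\frac{m}{n}}$ are self-reciprocal, i.e. $q^{\deg P}P(q^{-1})=P(q)$ for $P\in\{\mathcal{A}_{\frac{m}{n}},\mathcal{B}_{\frac{m}{n}}\}$; (ii) $\mathcal{A}_{\frac{m}{n}},\mathcal{B}_{\frac{m}{n}},\mathcal{C}_{\frac{m}{n}}$ are monic (leading and lowest-degree coefficients equal to $1$) and have positive coefficients.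
   Context: The $q$-deformed rationals: $x\mapsto[x]_q$ is the unique map from $\mathbb{Q}\cup\{\infty\}$ to $\mathbb{Q}(q)\cup\{\infty\}$ satisfying $[0]_q=0$, $[x+1]_q=q[x]_q+1$ and $[-1/x]_q=-1/(q[x]_q)$. For positive rational $x$, $\mathcal{N}_x,\mathcal{D}_x\in\mathbb{Z}[q]$ are the numerator and denominator of $[x]_q$: the polynomials with no common divisor in $\mathbb{Z}[q]$ other than $\pm1$ and with positive leading coefficients such that $[x]_q=\mathcal{N}_x/\mathcal{D}_x$. *)

(* Defs.v *)
From HB Require Import structures.
From mathcomp Require Import all_boot all_order all_algebra.
Set Implicit Arguments. Unset Strict Implicit. Unset Printing Implicit Defensive.
Import Order.TTheory GRing.Theory Num.Theory.
Local Open Scope ring_scope.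

(* q-deformed positive rationals, computed from the defining functional
   equations [0]=0, [x+1] = q[x]+1, [-1/x] = -1/(q[x]).  These imply
   [1]_q = 1, [x+1]_q = (qN+D)/D and [x/(x+1)]_q = qN/(qN+D) when [x]_q=N/D.
   qpair_aux k m n returns a pair (N, D) of integer polynomials with
   [m/n]_q = N/D (for m, n > 0), by running the subtractive Euclid algorithm;
   k is fuel (m + n suffices). *)
Fixpoint qpair_aux (k m n : nat) : {poly int} * {poly int} :=
  match k with
  | 0%N => (1, 1)
  | k'.+1 =>
    if (m == 0%N) || (n == 0%N) || (m == n) then (1, 1)
    else if (n < m)%N then
      let: (N, D) := qpair_aux k' (m - n) n in ('X * N + D, D)
    else
      let: (N, D) := qpair_aux k' m (n - m) in ('X * N, 'X * N + D)
  end.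

(* A representative fraction N/D of [m/n]_q (not a priori reduced). *)
Definition qpair (m n : nat) : {poly int} * {poly int} := qpair_aux (m + n) m n.

Definition qrat_is (m n : nat) (N D : {poly int}) : Prop :=
  D != 0 /\ N * (qpair m n).2 = (qpair m n).1 * D.

Definition zdvd (d p : {poly int}) : Prop := exists r : {poly int}, p = r * d.

Definition zcoprime (p r : {poly int}) : Prop :=
  forall d : {poly int}, zdvd d p -> zdvd d r -> d = 1 \/ d = -1.

Definition is_num_den (m n : nat) (N D : {poly int}) : Prop :=
  [/\ qrat_is m n N D, zcoprime N D, 0 < lead_coef N & 0 < lead_coef D].

Definition self_reciprocal (P : {poly int}) : Prop :=
  P = \poly_(i < size P) P`_((size P).-1 - i).

Definition low_coef (P : {poly int}) : int := P`_(find (fun c : int => c != 0) P).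

Definition monic2 (P : {poly int}) : Prop := lead_coef P = 1 /\ low_coef P = 1.

Definition pos_coefs (P : {poly int}) : Prop := forall i : nat, (i < size P)%N -> 0 < P`_i.

(* Main.v *)
Require Import Defs.
From HB Require Import structures.
From mathcomp Require Import all_boot all_order all_algebra.
From mathcomp Require Import ring zify.
Import Order.TTheory GRing.Theory Num.Theory.
Local Open Scope ring_scope.
Set Implicit Arguments. Unset Strict Implicit.
Implicit Types P Q : {poly int}.


Definition supp (P : {poly int}) (a b : nat) :=
  forall i, 0 <= P`_i /\ ((0 < P`_i) = (a <= i <= b)%N).

Lemma supp_out P a b i : supp P a b -> ~~ (a <= i <= b)%N -> P`_i = 0.
Proof.
move=> /(_ i) [h1 h2] hn; apply/eqP; move: h1; rewrite le0r; case/orP=> // h.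
by move: hn; rewrite -h2 h.
Qed.

Lemma supp_size P a b : supp P a b -> (a <= b)%N -> size P = b.+1.
Proof.
move=> hs hab; apply/eqP; rewrite eqn_leq; apply/andP; split.
  apply/leq_sizeP => j hj; apply: (supp_out hs); lia.
have : 0 < P`_b by have [_ ->] := hs b; lia.
rewrite lt0r => /andP [h _]; rewrite ltnNge; apply/negP => /leq_sizeP /(_ b (leqnn _)).
by move/eqP: h.
Qed.

Lemma sum_pos n (F : 'I_n -> int) : (forall j, 0 <= F j) ->
  (0 < \sum_(j < n) F j) = [exists j, 0 < F j].
Proof.
move=> h; apply/idP/idP.
  apply: contraLR; rewrite negb_exists => /forallP hn.
  rewrite big1 // => j _; apply/eqP; have := h j; rewrite le0r; case/orP => //.
  by move=> hh; have := hn j; rewrite hh.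
case/existsP => j hj; rewrite (bigD1 j) //=; apply: (lt_le_trans hj).
by rewrite lerDl sumr_ge0.
Qed.

Lemma supp_mul P Q a b c d : supp P a b -> supp Q c d -> (a <= b)%N -> (c <= d)%N ->
  supp (P * Q) (a + c) (b + d).
Proof.
move=> hP hQ hab hcd i; rewrite coefM; split.
  by apply: sumr_ge0 => j _; apply: mulr_ge0; [case: (hP j) | case: (hQ (i - j)%N)].
rewrite sum_pos; last by move=> j; apply: mulr_ge0; [case: (hP j) | case: (hQ (i - j)%N)].
apply/idP/idP.
  case/existsP => j; have [h1 h2] := hP j; have [h3 h4] := hQ (i - j)%N.
  rewrite mulr_ge0_gt0 // h2 h4 => hh; have := ltn_ord j; lia.
move=> hi; pose j := maxn a (i - d).
have hj : (j < i.+1)%N by rewrite /j; lia.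
apply/existsP; exists (Ordinal hj) => /=.
have [h1 h2] := hP j; have [h3 h4] := hQ (i - j)%N.
rewrite mulr_ge0_gt0 // h2 h4 /j; lia.
Qed.

Lemma supp_add P Q a b c d : supp P a b -> supp Q c d ->
  (c <= b.+1)%N -> (a <= d.+1)%N -> (a <= b)%N -> (c <= d)%N ->
  supp (P + Q) (minn a c) (maxn b d).
Proof.
move=> hP hQ h1 h2 h3 h4 i; rewrite coefD; have [g1 g2] := hP i; have [g3 g4] := hQ i.
split; first exact: addr_ge0.
apply/idP/idP.
  move=> hpos; have : (0 < P`_i) || (0 < Q`_i).
    apply: contraLR hpos; rewrite negb_or => /andP [n1 n2].
    have e1 : P`_i = 0 by apply/eqP; move: g1; rewrite le0r; case/orP=> // hh; move: n1; rewrite hh.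
    have e2 : Q`_i = 0 by apply/eqP; move: g3; rewrite le0r; case/orP=> // hh; move: n2; rewrite hh.
    by rewrite e1 e2 addr0 ltxx.
  rewrite g2 g4; lia.
move=> hi; have : (a <= i <= b)%N || (c <= i <= d)%N by lia.
rewrite -g2 -g4; case/orP => hh.
  by apply: (lt_le_trans hh); rewrite lerDl.
by apply: (lt_le_trans hh); rewrite lerDr.
Qed.

Lemma supp_X P a b : supp P a b -> supp ('X * P) a.+1 b.+1.
Proof.
move=> hP i; rewrite coefXM; case: i => [|i] /=.
  by rewrite lexx ltxx.
by have [h1 h2] := hP i; rewrite h1 h2.
Qed.

Lemma supp_ext P a b a' b' : supp P a b -> a = a' -> b = b' -> supp P a' b'.
Proof. by move=> h <- <-. Qed.


Definition rv (d : nat) (P : {poly int}) := \poly_(i < d.+1) P`_(d - i).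

Lemma rvD d P Q : rv d (P + Q) = rv d P + rv d Q.
Proof. by apply/polyP => i; rewrite coefD !coef_poly; case: ifP; rewrite ?coefD ?addr0. Qed.

Lemma rvB d P Q : rv d (P - Q) = rv d P - rv d Q.
Proof. by apply/polyP => i; rewrite coefB !coef_poly; case: ifP; rewrite ?coefB ?subr0. Qed.

Lemma rvC d c P : rv d (c%:P * P) = c%:P * rv d P.
Proof. by apply/polyP => i; rewrite coefCM !coef_poly; case: ifP; rewrite ?coefCM ?mulr0. Qed.

Lemma size_rv d P : (size (rv d P) <= d.+1)%N.
Proof. exact: size_poly. Qed.

Lemma coef_big (P : {poly int}) i d : (size P <= d.+1)%N -> (d < i)%N -> P`_i = 0.
Proof. by move=> /leq_sizeP h hi; apply: h. Qed.

Lemma rvK d P : (size P <= d.+1)%N -> rv d (rv d P) = P.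
Proof.
move=> hs; apply/polyP => i; rewrite !coef_poly; case: ifP => hi.
  rewrite ifT; last lia.
  by congr (_`_ _); lia.
by rewrite (coef_big hs) //; lia.
Qed.

Lemma rvX d P : (size P <= d.+1)%N -> rv d.+1 ('X * P) = rv d P.
Proof.
move=> hs; apply/polyP => i; rewrite !coef_poly coefXM.
case: (ltnP i d.+1) => hi.
  rewrite ifT; last lia.
  by rewrite ifF; [congr (_`_ _); lia | apply/eqP; lia].
by case: ifP => // _; rewrite ifT //; apply/eqP; lia.
Qed.

Lemma rvS d P : (size P <= d.+1)%N -> rv d.+1 P = 'X * rv d P.
Proof.
move=> hs; apply/polyP => i; rewrite !coef_poly coefXM.
case: i => [|i] /=; first by rewrite (coef_big hs) //; lia.
rewrite coef_poly; case: ifP => hi //.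
Qed.

Lemma rvXn n b Q : (size Q <= b.+1)%N -> rv (n + b) Q = 'X^n * rv b Q.
Proof.
move=> hs; elim: n => [|n IH]; first by rewrite expr0 mul1r.
rewrite addSn rvS; last by apply: (leq_trans hs); lia.
by rewrite IH exprS mulrA.
Qed.

Lemma rvM a b P Q : (size P <= a.+1)%N -> (size Q <= b.+1)%N ->
  rv (a + b) (P * Q) = rv a P * rv b Q.
Proof.
elim: a P => [|a IH] P hP hQ.
  move: (size1_polyC hP) => ->.
  rewrite rvC add0n; congr (_ * _).
  by apply/polyP => i; rewrite coef_poly !coefC; case: i.
have eP : P = 'X * drop_poly 1 P + (P`_0)%:P.
  rewrite -[LHS](poly_take_drop 1) addrC mulrC expr1; congr (_ + _).
  by apply/polyP => i; rewrite coef_take_poly coefC; case: i.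
have hd : (size (drop_poly 1 P) <= a.+1)%N by rewrite size_drop_poly; lia.
rewrite eP mulrDl rvD -mulrA addSn rvX; last first.
  by apply: (leq_trans (size_mul_leq _ _)); lia.
rewrite IH // rvC rvD rvX // -(mulr1 (P`_0)%:P) rvC.
have -> : rv (a+b).+1 Q = 'X^(a.+1) * rv b Q by rewrite -addSn rvXn.
have -> : rv a.+1 1 = 'X^(a.+1).
  rewrite -[a.+1]addn0 rvXn ?size_poly1 //.
  have -> : rv 0 1 = 1 by apply/polyP => -[|i]; rewrite coef_poly !coef1.
  by rewrite mulr1 addn0.
ring.
Qed.

Lemma rv_supp P a b d : supp P a b -> (b <= d)%N -> (a <= b)%N -> supp (rv d P) (d - b) (d - a).
Proof.
move=> hP hbd hab i; rewrite coef_poly; case: ifP => hi.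
  have [h1 h2] := hP (d - i)%N; rewrite h1 h2; split => //; lia.
by rewrite lexx ltxx; split => //; lia.
Qed.

Lemma rv_self P d : size P = d.+1 -> rv d P = P -> self_reciprocal P.
Proof. by move=> hs hr; rewrite /self_reciprocal hs /= -{1}hr. Qed.



Definition INV (m n : nat) (p p' : {poly int} * {poly int}) : Prop :=
 exists k a c,
  [/\ supp p.1 a k, supp p.2 0 c, (a <= c)%N, (c <= k)%N &
  [/\ (n < m)%N -> a = 0%N /\ (c < k)%N /\ p.1`_0 = 1, (m < n)%N -> c = k /\ (0 < a)%N,
      m = n -> k = 0%N, p.1`_k = 1 & p.2`_0 = 1]] /\
  p'.1 = rv k p.2 /\ p'.2 = rv k p.1 /\ exists u v (j : nat), u * p.1 + v * p.2 = 'X^j.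

Lemma supp1 : supp 1 0 0.
Proof. move=> i; rewrite coef1; case: i => [|i] //=; rewrite ?ltr01 ?ler01 //. Qed.

Lemma size_supp P a b : supp P a b -> (a <= b)%N -> (size P <= b.+1)%N.
Proof. by move=> h hab; rewrite (supp_size h hab). Qed.

Lemma inv f m n : (0 < m)%N -> (0 < n)%N -> (m + n <= f)%N ->
  INV m n (qpair_aux f m n) (qpair_aux f n m).
Proof.
elim: f m n => [|f IH] m n hm hn hf; first lia.
rewrite /=.
have -> : (m == 0%N) = false by apply/eqP; lia.
have -> : (n == 0%N) = false by apply/eqP; lia.
case: (ltngtP n m) => hnm.
- rewrite /=.
  have := IH (m - n)%N n ltac:(lia) hn ltac:(lia).
  case: (qpair_aux f (m - n) n) => N0 D0; case: (qpair_aux f n (m - n)) => N0' D0'.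
  move=> [k0 [a0 [c0 [[hN hD hac hck [_ _ _ hNk hD0]] [/= e1 [e2 [u [v [j hb]]]]]]]]]; simpl in *.
  have sN := size_supp hN ltac:(lia); have sD := size_supp hD ltac:(lia).
  have sD' : (size D0 <= k0.+1)%N by lia.
  exists k0.+1, 0%N, c0; split; first split => //=.
  + apply: (supp_ext (supp_add (supp_X hN) hD ltac:(lia) ltac:(lia) ltac:(lia) ltac:(lia))); lia.
  + lia.
  + split => //; try lia.
    * move=> _; split; [by [] | split; first lia].
      by rewrite coefD coefXM /= hD0 add0r.
    * by rewrite coefD coefXM /= hNk (supp_out hD) ?addr0 //; lia.
    rewrite /=; split; first by rewrite e1 rvS.
    split; first by rewrite e1 e2 rvD rvX // rvS // addrC.
    exists u, ('X * v - u), j.+1; rewrite exprS -hb; ring.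
- rewrite /=.
  have := IH m (n - m)%N hm ltac:(lia) ltac:(lia).
  case: (qpair_aux f m (n - m)) => N0 D0; case: (qpair_aux f (n - m) m) => N0' D0'.
  move=> [k0 [a0 [c0 [[hN hD hac hck [_ _ _ hNk hD0]] [/= e1 [e2 [u [v [j hb]]]]]]]]]; simpl in *.
  have sN := size_supp hN ltac:(lia); have sD := size_supp hD ltac:(lia).
  have sD' : (size D0 <= k0.+1)%N by lia.
  exists k0.+1, a0.+1, k0.+1; split; first split => //=.
  + exact: supp_X.
  + apply: (supp_ext (supp_add (supp_X hN) hD ltac:(lia) ltac:(lia) ltac:(lia) ltac:(lia))); lia.
  + lia.
  + split => //; try lia.
    * by rewrite coefXM /= hNk.
    * by rewrite coefD coefXM /= hD0 add0r.
  + rewrite /=; split; first by rewrite e1 e2 rvD rvX // rvS // addrC.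
    split; first by rewrite e2 rvX.
    exists (u - 'X * v), ('X * v), j.+1; rewrite exprS -hb; ring.
- subst m; rewrite /=.
  exists 0%N, 0%N, 0%N; split; first split => //; try exact: supp1.
  + split; [by rewrite ltnn | by rewrite ltnn | by [] | by rewrite /= coef1 | by rewrite /= coef1].
  + have e : rv 0 1 = 1 by apply/polyP => -[|i]; rewrite coef_poly !coef1.
    rewrite /= e; split => //; split => //.
    by exists 1, 0, 0%N; rewrite expr0; ring.
Qed.


Lemma peel (Nq Dq N1 D1 : {poly int}) : Dq`_0 = 1 -> forall j s,
  'X^j * N1 = Nq * s -> 'X^j * D1 = Dq * s -> N1 = Nq * s /\ D1 = Dq * s \/
  exists s', N1 = Nq * s' /\ D1 = Dq * s'.
Proof.
move=> hD0; elim=> [|j IH] s h1 h2.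
  by left; rewrite -h1 -h2 !expr0 !mul1r.
have hs0 : s`_0 = 0.
  have := congr1 (fun p : {poly int} => p`_0) h2; rewrite /= !coef0M hD0 mul1r coefXn => <-; by rewrite mul0r.
have es : s = 'X * drop_poly 1 s.
  rewrite -[LHS](poly_take_drop 1) expr1 mulrC.
  have -> : take_poly 1 s = 0 by apply/polyP => -[|i]; rewrite coef_take_poly ?hs0 coef0.
  by rewrite add0r.
have hX : ('X : {poly int}) != 0 by rewrite polyX_eq0.
move: h1 h2; rewrite es exprS -!mulrA [Nq * _]mulrCA [Dq * _]mulrCA.
move=> /(mulfI hX) h1 /(mulfI hX) h2.
right; case: (IH _ h1 h2) => [[e1 e2]|[s' [e1 e2]]]; by [exists (drop_poly 1 s) | exists s'].
Qed.

Lemma ident (Nq Dq N1 D1 : {poly int}) : (exists u v (j : nat), u*Nq + v*Dq = 'X^j) ->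
  Dq`_0 = 1 -> 0 < lead_coef Dq -> N1 * Dq = Nq * D1 -> zcoprime N1 D1 ->
  0 < lead_coef D1 -> N1 = Nq /\ D1 = Dq.
Proof.
move=> [u [v [j hb]]] hD0 hlq he hc hl1.
pose s := u * N1 + v * D1.
have h1 : 'X^j * N1 = Nq * s.
  rewrite -hb /s; transitivity (u * Nq * N1 + v * (N1 * Dq)); first ring.
  by rewrite he; ring.
have h2 : 'X^j * D1 = Dq * s.
  rewrite -hb /s; transitivity (u * (Nq * D1) + v * Dq * D1); first ring.
  by rewrite -he; ring.
have [s' [e1 e2]] : exists s', N1 = Nq * s' /\ D1 = Dq * s'.
  by case: (peel hD0 h1 h2) => [[e1 e2]|//]; exists s.
have d1 : zdvd s' N1 by exists Nq.
have d2 : zdvd s' D1 by exists Dq.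
case: (hc _ d1 d2) => es; rewrite es in e1 e2.
  by rewrite e1 e2 !mulr1.
move: hl1; rewrite e2 mulrN1 lead_coefN oppr_gt0 => hneg.
by have := lt_trans hneg hlq; rewrite ltxx.
Qed.


Lemma rv_lead d P : rv d P = P -> P`_d = P`_0.
Proof. by move=> h; rewrite -{1}h coef_poly ltnSn subnn. Qed.

Lemma low0 P : P`_0 != 0 -> low_coef P = P`_0.
Proof.
rewrite /low_coef; case E: (polyseq P) => [|x s] /=; first by [].
by move=> h; rewrite h.
Qed.

Lemma pos_supp P b : supp P 0 b -> pos_coefs P.
Proof.
move=> h i; rewrite (supp_size h) // => hi; have [_ ->] := h i; lia.
Qed.

Lemma lead_supp P a b : supp P a b -> (a <= b)%N -> lead_coef P = P`_b.
Proof. by move=> h hab; rewrite lead_coefE (supp_size h hab). Qed.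

Lemma pos_at P a b i : supp P a b -> (a <= i <= b)%N -> 0 < P`_i.
Proof. by move=> h hi; have [_ ->] := h i. Qed.


Unset Implicit Arguments.
Theorem proposition2 (m n : nat) (N1 D1 N2 D2 : {poly int}) :
  (1 <= n)%N -> (n < m)%N -> coprime m n ->
  is_num_den m n N1 D1 -> is_num_den n m N2 D2 ->
  let A := 'X * N1 * N2 + D1 * D2 in
  let B := N1 * D2 - D1 * N2 in
  let C := 'X * N1 ^+ 2 + D1 ^+ 2 in
  (self_reciprocal A /\ self_reciprocal B) /\
  (monic2 A /\ monic2 B /\ monic2 C /\ pos_coefs A /\ pos_coefs B /\ pos_coefs C).
Proof.
move=> hn hnm _ [[hD1 e1] hc1 hl1 hl1'] [[hD2 e2] hc2 hl2 hl2'] A B C.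
have I1 := inv (f := (m + n)%N) (m := m) (n := n) ltac:(lia) hn (leqnn _).
have I2 := inv (f := (m + n)%N) (m := n) (n := m) hn ltac:(lia) ltac:(lia).
move: e1 e2; rewrite /qpair [(n + m)%N]addnC.
move: I1 I2.
case Ep: (qpair_aux (m + n) m n) => [N D]; case Ep': (qpair_aux (m + n) n m) => [N' D'].
move=> [k [a [c [[hN hD hac hck [h1 _ _ hNk hD0]] [/= r1 [r2 bz]]]]]].
move=> [k' [a' [c' [[hN' hD' _ hck' [_ _ _ _ hD'0]] [/= _ [_ bz']]]]]] /= e1 e2.
have [ha [hck2 hN0]] := h1 hnm; subst a.
have hlD : 0 < lead_coef D by rewrite (lead_supp hD) //; apply: (pos_at hD); lia.
have hlD' : 0 < lead_coef D' by rewrite (lead_supp hD') //; apply: (pos_at hD'); lia.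
have [E1 E1'] := ident bz hD0 hlD e1 hc1 hl1'.
have [E2 E2'] := ident bz' hD'0 hlD' e2 hc2 hl2'.
subst N1 D1 N2 D2 N' D'.
rewrite /= in hN hD hNk hD0 hN0.
have sN : size N = k.+1 by apply: (supp_size hN).
have sD : (size D <= k.+1)%N by rewrite (supp_size hD) //.
have sXN : (size ('X * N)%R <= k.+2)%N by rewrite (supp_size (supp_X hN)).
have sD2 : (size D <= k.+2)%N by lia.
have hN2s := rv_supp (d := k) hD hck (leq0n _).
have hD2s := rv_supp (d := k) hN (leqnn _) (leq0n _).
have rN0 : (rv k N)`_0 = 1 by rewrite coef_poly /= subn0.
have rDk : (rv k D)`_0 = 0 by rewrite coef_poly /= subn0 (supp_out hD) //; lia.
have sA : supp A 0 (k.+1 + k).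
  rewrite /A; apply: (supp_ext (supp_add (supp_mul (supp_X hN) hN2s _ _) (supp_mul hD hD2s _ _) _ _ _ _)); lia.
have rA : rv (k.+1 + k) A = A.
  rewrite /A rvD rvM ?size_rv // rvX ?sN // rvK // rvM ?size_rv // rvS // rvK ?sN //; ring.
have A0 : A`_0 = 1 by rewrite /A coefD !coef0M coefX /= hD0 rN0 !mul0r add0r mulr1.
have szA := supp_size sA (leq0n _).
have mA : monic2 A.
  split; last by rewrite low0 A0 //.
  by rewrite lead_coefE szA /= (rv_lead rA).
have sC : supp C 0 (k.+1 + k).
  rewrite /C !expr2; apply: (supp_ext (supp_add (supp_X (supp_mul hN hN _ _)) (supp_mul hD hD _ _) _ _ _ _)); lia.
have szC := supp_size sC (leq0n _).
have mC : monic2 C.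
  split.
    rewrite lead_coefE szC /= /C coefD coefXM /= (supp_out (supp_mul hD hD _ _)) ?addr0; try lia.
    rewrite expr2 -(lead_supp (supp_mul hN hN _ _)) // lead_coefM (lead_supp hN) // hNk mulr1 //.
  have C0 : C`_0 = 1 by rewrite /C coefD coefXM /= add0r expr2 coef0M hD0 mulr1.
  by rewrite low0 C0.
have hsN : (size N <= k.+1)%N by rewrite sN.
have rB : rv (k + k) B = B.
  rewrite /B rvB !rvM ?size_rv // !rvK //; ring.
have B0 : B`_0 = 1 by rewrite /B coefB !coef0M hN0 rN0 rDk hD0; ring.
pose f := (m + n).-1.
have ef : (m + n = f.+1)%N by rewrite /f; lia.
rewrite ef /= in Ep Ep'.
have q1 : (m == 0%N) = false by apply/eqP; lia.
have q2 : (n == 0%N) = false by apply/eqP; lia.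
have q3 : (m == n) = false by apply/eqP; lia.
have q4 : (n == m) = false by apply/eqP; lia.
have q5 : (m < n)%N = false by apply/negbTE; rewrite -leqNgt ltnW.
rewrite q1 q2 q3 q4 q5 hnm /= in Ep Ep'.
have I0 := inv (f := f) (m := (m - n)%N) (n := n) ltac:(lia) hn ltac:(lia).
move: I0 Ep Ep'.
case: (qpair_aux f (m - n) n) => [N0 D0]; case: (qpair_aux f n (m - n)) => [N0' D0'].
move=> [k0 [a0 [c0 [[hN0s hD0s ha0 hc0 _] [/= r1 [r2 _]]]]]].
case=> eN eD; case=> f1 f2.
rewrite /= in hN0s hD0s.
have hNs := supp_add (supp_X hN0s) hD0s ltac:(lia) ltac:(lia) ltac:(lia) ltac:(lia).
have ek : k = k0.+1.
  have := supp_size hNs ltac:(lia); rewrite eN sN; lia.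
subst k.
have hN0's := rv_supp (d := k0) hD0s hc0 (leq0n _).
have hD0's := rv_supp (d := k0) hN0s (leqnn _) ltac:(lia).
have eB : B = 'X * ('X * (N0 * N0')) + 'X * (N0 * D0') + D0 * D0'.
  rewrite /B -f1 -f2 -eN -eD; ring.
have sB : supp B 0 (k0.+1 + k0.+1).
  rewrite eB r1 r2.
  apply: (supp_ext (supp_add (supp_add (supp_X (supp_X (supp_mul hN0s hN0's _ _))) (supp_X (supp_mul hN0s hD0's _ _)) _ _ _ _) (supp_mul hD0s hD0's _ _) _ _ _ _)); lia.
have szB := supp_size sB (leq0n _).
have mB : monic2 B.
  split; last by rewrite low0 B0.
  by rewrite lead_coefE szB /= (rv_lead rB).
split; first split.
- apply: (rv_self szA rA).
- apply: (rv_self szB rB).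
split => //; split => //; split => //.
split; first exact: (pos_supp sA).
split; first exact: (pos_supp sB).
exact: (pos_supp sC).
Qed.
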